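(* Let $(x_1(t),x_2(t),x_3(t))$, $t\in[0,T)$, be a solution of the Ricci flow system $\frac{dx_i}{dt}=-2r_ix_i$ with $x_1(0)=x_2(0)$. Suppose the initial metric $g_0\leftrightarrow(x_1(0),x_2(0),x_3(0))$ has strictly positive sectional curvature. Then for all $t\in[0,T)$: - $\frac{x_3(t)}{x_1(t)}<\frac{4(d-1)}{d}$; - the Ricci tensor of $g_t\leftrightarrow(x_1(t),x_2(t),x_3(t))$ is positive definite.
   Context: Let $(G,K,d)$ be one of the following three triples: - $(SU(3),\text{maximal torus }T^2,2)$; - $(Sp(3),Sp(1)^3,4)$; - (compact $F_4$, $Spin(8)$, $8$). Let $M=G/K$. With $\langle X,Y\rangle_0=-\tfrac12\mathrm{Re}\,\mathrm{tr}(XY)$ (suitably extended for $F_4$), let $\mathfrak p=\mathfrak k^\perp=V_1\oplus V_2\oplus V_3$ be the decomposition into three pairwise inequivalent irreducible $\mathrm{Ad}(K)$-invariant subspaces of dimension $d$. We write $g\leftrightarrow(x_1,x_2,x_3)$ for the $G$-invariant metric given by $\sum_i x_i\langle\cdot,\cdot\rangle_0|_{V_i}$, with $x_i>0$. Its Ricci tensor is $\sum_i x_ir_i\langle\cdot,\cdot\rangle_0|_{V_i}$, where $$r_i=\frac{d x_i^2-d x_j^2-d x_k^2+(10d-8)x_jx_k}{2x_1x_2x_3},\qquad\{i,j,k\}=\{1,2,3\}.$$ The Ricci flow of $G$-invariant metrics is the ODE system $\frac{dx_i}{dt}=-2r_ix_i$. It is known that for $x_1=x_2$ the metric has strictly positive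 sectional curvature iff $0<x_3/x_1<1$ or $1<x_3/x_1<\tfrac43$. *)

(* Defs.v *)
From Stdlib Require Import Reals Lra.
Open Scope R_scope.

(* The three admissible triples (G,K,d): d = 2 (SU(3)/T^2), 4 (Sp(3)/Sp(1)^3),
   8 (F_4/Spin(8)). *)
Definition admissible_d (d : R) : Prop := d = 2 \/ d = 4 \/ d = 8.

Definition ric_comp (d xi xj xk x1 x2 x3 : R) : R :=
  (d * xi ^ 2 - d * xj ^ 2 - d * xk ^ 2 + (10 * d - 8) * xj * xk)
    / (2 * x1 * x2 * x3).

Definition r1 (d x1 x2 x3 : R) : R := ric_comp d x1 x2 x3 x1 x2 x3.
Definition r2 (d x1 x2 x3 : R) : R := ric_comp d x2 x1 x3 x1 x2 x3.
Definition r3 (d x1 x2 x3 : R) : R := ric_comp d x3 x1 x2 x1 x2 x3.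

Definition ricci_flow_solution (d T : R) (x1 x2 x3 : R -> R) : Prop :=
  0 < T /\
  (forall t, 0 <= t < T -> 0 < x1 t /\ 0 < x2 t /\ 0 < x3 t) /\
  (forall t, 0 < t < T ->
     derivable_pt_lim x1 t (-2 * r1 d (x1 t) (x2 t) (x3 t) * x1 t) /\
     derivable_pt_lim x2 t (-2 * r2 d (x1 t) (x2 t) (x3 t) * x2 t) /\
     derivable_pt_lim x3 t (-2 * r3 d (x1 t) (x2 t) (x3 t) * x3 t)) /\
  limit1_in x1 (fun t => 0 <= t < T) (x1 0) 0 /\
  limit1_in x2 (fun t => 0 <= t < T) (x2 0) 0 /\
  limit1_in x3 (fun t => 0 <= t < T) (x3 0) 0.

(* Known characterization (from the context) of strictly positive sectional
   curvature for metrics with x1 = x2: 0 < x3/x1 < 1 or 1 < x3/x1 < 4/3. *)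
Definition pos_sec_curv_x1_eq_x2 (x1 x3 : R) : Prop :=
  (0 < x3 / x1 < 1) \/ (1 < x3 / x1 < 4 / 3).

(* Ricci tensor sum_i x_i r_i <.,.>_0|V_i is positive definite iff each
   coefficient x_i r_i is positive. *)
Definition ricci_pos_def (d x1 x2 x3 : R) : Prop :=
  0 < x1 * r1 d x1 x2 x3 /\ 0 < x2 * r2 d x1 x2 x3 /\ 0 < x3 * r3 d x1 x2 x3.

(* Main.v *)
Require Import Defs.
From Stdlib Require Import Reals Lra Psatz.
From Coquelicot Require Import Coquelicot.
Open Scope R_scope.

Lemma dpl_eq f x l l' : l = l' -> derivable_pt_lim f x l -> derivable_pt_lim f x l'.
Proof. intros ->; auto. Qed.

Lemma mono_dec f df a b : a <= b ->
  (forall x, a < x < b -> derivable_pt_lim f x (df x)) ->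
  (forall x, a <= x <= b -> continuity_pt f x) ->
  (forall x, a <= x <= b -> df x <= 0) -> f b <= f a.
Proof.
  intros hab hd hc hn.
  destruct (MVT_gen f a b df) as [c [hc1 hc2]].
  - rewrite Rmin_left, Rmax_right by lra. intros x hx. apply is_derive_Reals. auto.
  - rewrite Rmin_left, Rmax_right by lra. auto.
  - rewrite Rmin_left, Rmax_right in hc1 by lra.
    specialize (hn c hc1). nra.
Qed.

Lemma mono_inc f df a b : a <= b ->
  (forall x, a < x < b -> derivable_pt_lim f x (df x)) ->
  (forall x, a <= x <= b -> continuity_pt f x) ->
  (forall x, a <= x <= b -> 0 <= df x) -> f a <= f b.
Proof.
  intros hab hd hc hn.
  destruct (MVT_gen f a b df) as [c [hc1 hc2]].
  - rewrite Rmin_left, Rmax_right by lra. intros x hx. apply is_derive_Reals. auto.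
  - rewrite Rmin_left, Rmax_right by lra. auto.
  - rewrite Rmin_left, Rmax_right in hc1 by lra.
    specialize (hn c hc1). nra.
Qed.

Lemma der_sq_exp F l c t : derivable_pt_lim F t l ->
  derivable_pt_lim (fun s => F s * F s * exp (c * s)) t
    ((2 * F t * l + F t * F t * c) * exp (c * t)).
Proof.
  intros h.
  assert (he : derivable_pt_lim (fun s => exp (c * s)) t (exp (c*t) * c)).
  { apply (derivable_pt_lim_comp (fun s => c * s) exp t c (exp (c*t))).
    - apply (dpl_eq _ _ (0 * t + c * 1)). ring.
      apply (derivable_pt_lim_mult (fun _ => c) (fun s => s)).
      apply derivable_pt_lim_const. apply derivable_pt_lim_id.
    - apply derivable_pt_lim_exp. }
  assert (h2 := derivable_pt_lim_mult F F t l l h h).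
  assert (h3 := derivable_pt_lim_mult _ _ t _ _ h2 he).
  eapply dpl_eq; [|exact h3]. unfold mult_fct. ring.
Qed.

Lemma cont_sq_exp F c t : continuity_pt F t ->
  continuity_pt (fun s => F s * F s * exp (c * s)) t.
Proof.
  intros h.
  apply (continuity_pt_mult (fun s => F s * F s) (fun s => exp (c * s))).
  apply (continuity_pt_mult F F); auto.
  apply derivable_continuous_pt.
  exists (exp (c*t) * c).
  apply (derivable_pt_lim_comp (fun s => c * s) exp t c (exp (c*t))).
  - apply (dpl_eq _ _ (0 * t + c * 1)). ring.
    apply (derivable_pt_lim_mult (fun _ => c) (fun s => s)).
    apply derivable_pt_lim_const. apply derivable_pt_lim_id.
  - apply derivable_pt_lim_exp.
Qed.

Lemma gron F G a b : a <= b ->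
  (forall t, a <= t <= b -> continuity_pt F t) ->
  (forall t, a <= t <= b -> continuity_pt G t) ->
  (forall t, a < t < b -> derivable_pt_lim F t (F t * G t)) ->
  (F a = 0 -> F b = 0) /\ (F b = 0 -> F a = 0).
Proof.
  intros hab hF hG hd.
  destruct (continuity_ab_maj (fun t => Rabs (G t)) a b hab) as [M [hM _]].
  { intros c hc. apply (continuity_pt_comp G Rabs). auto. apply Rcontinuity_abs. }
  set (K := Rabs (G M)).
  assert (hK : forall t, a <= t <= b -> - K <= G t <= K).
  { intros t ht. specialize (hM t ht). cbv beta in hM.
    unfold K. assert (0 <= Rabs (G M)) by apply Rabs_pos. revert hM H; unfold Rabs; destruct (Rcase_abs (G t)), (Rcase_abs (G M)); lra. }
  split; intros h0.
  - assert (hP := mono_dec (fun s => F s * F s * exp ((-(2*K)) * s))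
       (fun s => (2 * F s * (F s * G s) + F s * F s * (-(2*K))) * exp ((-(2*K)) * s)) a b hab).
    cbv beta in hP.
    assert (F b * F b * exp (- (2 * K) * b) <= F a * F a * exp (- (2 * K) * a)).
    { apply hP.
      - intros x hx. apply der_sq_exp. auto.
      - intros x hx. apply cont_sq_exp. auto.
      - intros x hx. specialize (hK x hx). assert (0 < exp (- (2 * K) * x)) by apply exp_pos.
        assert (0 <= F x * F x) by (pose proof (Rle_0_sqr (F x)); unfold Rsqr in *; lra). assert (0 <= (F x*F x)*(K - G x)) by (apply Rmult_le_pos; lra).
        assert (0 <= (F x*F x)*(K - G x) * exp (- (2 * K) * x)) by (apply Rmult_le_pos; lra).
        nra. }
    rewrite h0 in H. assert (0 < exp (- (2 * K) * b)) by apply exp_pos.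
    assert (F b * F b <= 0).
    { apply (Rmult_le_reg_r (exp (- (2 * K) * b))); lra. }
    apply Rsqr_0_uniq. unfold Rsqr. pose proof (Rle_0_sqr (F b)); unfold Rsqr in *; lra.
  - assert (hP := mono_inc (fun s => F s * F s * exp ((2*K) * s))
       (fun s => (2 * F s * (F s * G s) + F s * F s * (2*K)) * exp ((2*K) * s)) a b hab).
    cbv beta in hP.
    assert (F a * F a * exp ((2 * K) * a) <= F b * F b * exp ((2 * K) * b)).
    { apply hP.
      - intros x hx. apply der_sq_exp. auto.
      - intros x hx. apply cont_sq_exp. auto.
      - intros x hx. specialize (hK x hx). assert (0 < exp ((2 * K) * x)) by apply exp_pos.
        assert (0 <= F x * F x) by (pose proof (Rle_0_sqr (F x)); unfold Rsqr in *; lra). assert (0 <= (F x*F x)*(K + G x)) by (apply Rmult_le_pos; lra).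
        assert (0 <= (F x*F x)*(K + G x) * exp ((2 * K) * x)) by (apply Rmult_le_pos; lra).
        nra. }
    rewrite h0 in H. assert (0 < exp ((2 * K) * a)) by apply exp_pos.
    assert (F a * F a <= 0).
    { apply (Rmult_le_reg_r (exp ((2 * K) * a))); lra. }
    apply Rsqr_0_uniq. unfold Rsqr. pose proof (Rle_0_sqr (F a)); unfold Rsqr in *; lra.
Qed.

Lemma ext_der (x : R -> R) t l : 0 < t -> derivable_pt_lim x t l ->
  derivable_pt_lim (fun s => x (Rabs s)) t l.
Proof.
  intros ht h.
  rewrite <- (Rabs_pos_eq t) in h by lra.
  assert (h2 := derivable_pt_lim_comp Rabs x t 1 l (Rabs_derive_1 t ht) h).
  rewrite Rmult_1_r in h2. exact h2.
Qed.

Lemma ext_cont (x : R -> R) T l :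
  0 < T -> (forall t, 0 < t < T -> derivable_pt_lim x t (l t)) ->
  limit1_in x (fun t => 0 <= t < T) (x 0) 0 ->
  forall t, 0 <= t < T -> continuity_pt (fun s => x (Rabs s)) t.
Proof.
  intros hT hd hl t [h0 ht].
  destruct (Rle_lt_or_eq_dec 0 t h0) as [hp|he].
  - apply (continuity_pt_comp Rabs x). apply Rcontinuity_abs.
    rewrite Rabs_pos_eq by lra. apply derivable_continuous_pt.
    exists (l t). apply hd; lra.
  - rewrite <- he. unfold continuity_pt, continue_in, limit1_in, limit_in in *.
    intros eps heps. destruct (hl eps heps) as [alp [halp H]].
    exists (Rmin alp T). split. apply Rmin_pos; lra.
    intros x0 [_ hx]. rewrite Rabs_R0. simpl in *. unfold R_dist in *.
    apply H. rewrite Rminus_0_r in *.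
    assert (Rabs x0 < alp /\ Rabs x0 < T).
    { split; eapply Rlt_le_trans; eauto; [apply Rmin_l | apply Rmin_r]. }
    rewrite Rabs_Rabsolu. split; [split; [apply Rabs_pos|] |]; tauto.
Qed.

Ltac ct := repeat first [ apply continuity_pt_mult | apply continuity_pt_plus
  | apply continuity_pt_minus | apply continuity_pt_opp
  | (apply continuity_pt_const; intros ? ?; reflexivity) | assumption ].

Theorem mainTheorem6 (d T : R) (x1 x2 x3 : R -> R) :
  admissible_d d ->
  ricci_flow_solution d T x1 x2 x3 ->
  x1 0 = x2 0 ->
  pos_sec_curv_x1_eq_x2 (x1 0) (x3 0) ->
  forall t, 0 <= t < T ->
    x3 t / x1 t < 4 * (d - 1) / d /\ ricci_pos_def d (x1 t) (x2 t) (x3 t).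
Proof.
  intros Hd [HT [Hpos [Hder [L1 [L2 L3]]]]] H12 Hsec.
  assert (dpos : 2 <= d) by (destruct Hd as [->|[->| ->]]; lra).
  pose (y1 := fun s => x1 (Rabs s)).
  pose (y2 := fun s => x2 (Rabs s)).
  pose (y3 := fun s => x3 (Rabs s)).
  assert (Y1 : forall s, 0 <= s -> y1 s = x1 s) by (intros; unfold y1; rewrite Rabs_pos_eq; auto).
  assert (Y2 : forall s, 0 <= s -> y2 s = x2 s) by (intros; unfold y2; rewrite Rabs_pos_eq; auto).
  assert (Y3 : forall s, 0 <= s -> y3 s = x3 s) by (intros; unfold y3; rewrite Rabs_pos_eq; auto).
  assert (C1 : forall s, 0 <= s < T -> continuity_pt y1 s)
    by (apply (ext_cont x1 T (fun t => -2 * r1 d (x1 t) (x2 t) (x3 t) * x1 t) HT); [intros; apply Hder; auto | auto]).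
  assert (C2 : forall s, 0 <= s < T -> continuity_pt y2 s)
    by (apply (ext_cont x2 T (fun t => -2 * r2 d (x1 t) (x2 t) (x3 t) * x2 t) HT); [intros; apply Hder; auto | auto]).
  assert (C3 : forall s, 0 <= s < T -> continuity_pt y3 s)
    by (apply (ext_cont x3 T (fun t => -2 * r3 d (x1 t) (x2 t) (x3 t) * x3 t) HT); [intros; apply Hder; auto | auto]).
  assert (D1 : forall s, 0 < s < T -> derivable_pt_lim y1 s (-2 * r1 d (x1 s) (x2 s) (x3 s) * x1 s))
    by (intros; apply ext_der; [lra | apply Hder; auto]).
  assert (D2 : forall s, 0 < s < T -> derivable_pt_lim y2 s (-2 * r2 d (x1 s) (x2 s) (x3 s) * x2 s))
    by (intros; apply ext_der; [lra | apply Hder; auto]).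
  assert (D3 : forall s, 0 < s < T -> derivable_pt_lim y3 s (-2 * r3 d (x1 s) (x2 s) (x3 s) * x3 s))
    by (intros; apply ext_der; [lra | apply Hder; auto]).
  assert (HD : forall t, 0 <= t < T -> x1 t = x2 t).
  { intros t [h0 ht].
    assert (y1 t - y2 t = 0).
    { refine (proj1 (gron (fun s => y1 s - y2 s)
        (fun s => d * (y3 s * y3 s - (y1 s + y2 s) * (y1 s + y2 s)) * / (y1 s * y2 s * y3 s))
        0 t h0 _ _ _) _).
      - intros s hs. assert (0 <= s < T) by lra. ct; auto.
      - intros s hs. assert (0 <= s < T) by lra.
        destruct (Hpos s H) as [p1 [p2 p3]].
        specialize (C1 s H); specialize (C2 s H); specialize (C3 s H).
        ct. apply continuity_pt_inv. ct.
        rewrite Y1, Y2, Y3 by lra. apply Rgt_not_eq. unfold Rgt.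
        apply Rmult_lt_0_compat; [apply Rmult_lt_0_compat|]; lra.
      - intros s hs. assert (hs' : 0 < s < T) by lra.
        destruct (Hpos s ltac:(lra)) as [p1 [p2 p3]].
        eapply dpl_eq; [| apply (derivable_pt_lim_minus y1 y2); [apply D1 | apply D2]; auto].
        rewrite Y1, Y2, Y3 by lra. unfold r1, r2, ric_comp. field. lra.
      - rewrite Y1, Y2 by lra. lra. }
    rewrite Y1, Y2 in H by lra. lra. }
  set (a := 4 * (d - 1) / d).
  assert (ha : 4 / 3 <= a) by (unfold a; destruct Hd as [->|[->| ->]]; lra).
  assert (W0 : 0 < a * x1 0 - x3 0).
  { destruct (Hpos 0 ltac:(lra)) as [p1 [p2 p3]].
    assert (x3 0 / x1 0 < 4 / 3) by (destruct Hsec; lra).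
    assert (x3 0 < 4 / 3 * x1 0).
    { apply (Rmult_lt_reg_r (/ x1 0)). apply Rinv_0_lt_compat; lra.
      replace (4/3 * x1 0 * / x1 0) with (4/3) by (field; lra). exact H. }
    nra. }
  pose (W := fun s => a * y1 s - y3 s).
  pose (GW := fun s => - (d * y3 s + 8 * (d - 1) * y1 s) * / (y1 s * y1 s)).
  assert (Wz : forall s, 0 <= s < T -> W s = 0 -> False).
  { intros s [h0 hs] hW.
    assert (W 0 = 0).
    { refine (proj2 (gron W GW 0 s h0 _ _ _) hW).
      - intros u hu. assert (0 <= u < T) by lra. unfold W. ct; auto.
      - intros u hu. assert (0 <= u < T) by lra.
        destruct (Hpos u H) as [p1 [p2 p3]].
        specialize (C1 u H); specialize (C3 u H). unfold GW.
        ct. apply continuity_pt_inv. ct.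
        rewrite Y1 by lra. apply Rgt_not_eq. unfold Rgt.
        apply Rmult_lt_0_compat; lra.
      - intros u hu. assert (hs' : 0 < u < T) by lra.
        destruct (Hpos u ltac:(lra)) as [p1 [p2 p3]].
        unfold W. eapply dpl_eq; [| apply (derivable_pt_lim_minus (fun s => a * y1 s) y3);
          [apply (derivable_pt_lim_scal y1 a); apply D1 | apply D3]; auto].
        unfold GW. rewrite Y1, Y3 by lra. rewrite <- (HD u) by lra.
        unfold r1, r3, ric_comp, a. field. lra. }
    unfold W in H. rewrite Y1, Y3 in H by lra. lra. }
  assert (Wpos : forall t, 0 <= t < T -> 0 < W t).
  { intros t ht. destruct (Rlt_or_le 0 (W t)) as [h|h]; auto. exfalso.
    destruct (Rle_lt_or_eq_dec _ _ h) as [hl|he]; [| apply (Wz t ht he)].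
    assert (W 0 > 0) by (unfold W; rewrite Y1, Y3 by lra; lra).
    assert (tpos : 0 < t).
    { destruct (Rle_lt_or_eq_dec 0 t (proj1 ht)) as [|e]; auto. subst t. lra. }
    destruct (Ranalysis5.IVT_interv (fun s => - W s) 0 t) as [s [hs hs0]]; auto.
    - intros u hu. assert (0 <= u < T) by lra. unfold W. ct; auto.
    - lra.
    - lra.
    - apply (Wz s). lra. lra. }
  intros t ht.
  destruct (Hpos t ht) as [p1 [p2 p3]].
  specialize (Wpos t ht). unfold W in Wpos. rewrite Y1, Y3 in Wpos by lra.
  rewrite <- (HD t ht).
  assert (hlt : x3 t < a * x1 t) by lra.
  split.
  - apply (Rmult_lt_reg_r (x1 t)); auto. fold a.
    replace (x3 t / x1 t * x1 t) with (x3 t) by (field; lra). lra.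
  - unfold ricci_pos_def, r1, r2, r3, ric_comp.
    assert (hc : a * d = 4 * (d - 1)) by (unfold a; field; lra).
    assert (x3 t * d < (10 * d - 8) * x1 t) by nra.
    split; [|split].
    + replace (x1 t * ((d * x1 t ^ 2 - d * x1 t ^ 2 - d * x3 t ^ 2 + (10 * d - 8) * x1 t * x3 t) / (2 * x1 t * x1 t * x3 t)))
        with (((10 * d - 8) * x1 t - d * x3 t) / (2 * x1 t)) by (field; lra).
      apply Rdiv_lt_0_compat; lra.
    + replace (x1 t * ((d * x1 t ^ 2 - d * x1 t ^ 2 - d * x3 t ^ 2 + (10 * d - 8) * x1 t * x3 t) / (2 * x1 t * x1 t * x3 t)))
        with (((10 * d - 8) * x1 t - d * x3 t) / (2 * x1 t)) by (field; lra).
      apply Rdiv_lt_0_compat; lra.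
    + replace (x3 t * ((d * x3 t ^ 2 - d * x1 t ^ 2 - d * x1 t ^ 2 + (10 * d - 8) * x1 t * x1 t) / (2 * x1 t * x1 t * x3 t)))
        with ((d * x3 t ^ 2 + (8 * d - 8) * x1 t ^ 2) / (2 * x1 t * x1 t)) by (field; lra).
      apply Rdiv_lt_0_compat; nra.
Qed.
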